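(* Let $\lambda_1\ge\lambda_2\ge\cdots\ge\lambda_d>0$, $k\in[d]$, and $c\in(0,1)$. Then $$\frac1k\sum_{i=k+1}^d\lambda_i\le\Big(\frac1k\sum_{i=1}^d\lambda_i^c\Big)^{1/c}.$$ *)

(* Defs.v *)
From mathcomp Require Import all_boot all_order all_algebra.
From mathcomp Require Import all_classical all_reals all_analysis.

(* Main.v *)
Require Import Defs.
From mathcomp Require Import all_boot all_order all_algebra.
From mathcomp Require Import all_classical all_reals all_analysis.
Import Order.TTheory GRing.Theory Num.Theory.
Local Open Scope ring_scope.

Theorem lemma4p11 (R : realType) (d k : nat) (lam : nat -> R) (c : R)
  (hmono : forall i j : nat, (1 <= i)%N -> (i <= j)%N -> (j <= d)%N -> lam j <= lam i)
  (hpos : forall i : nat, (1 <= i)%N -> (i <= d)%N -> 0 < lam i)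
  (hk1 : (1 <= k)%N) (hkd : (k <= d)%N)
  (hc0 : 0 < c) (hc1 : c < 1) :
  k%:R^-1 * (\sum_(k.+1 <= i < d.+1) lam i)
  <= powR (k%:R^-1 * (\sum_(1 <= i < d.+1) powR (lam i) c)) c^-1.
Proof.
set S := \sum_(1 <= i < d.+1) powR (lam i) c.
set M := k%:R^-1 * S.
set m := powR M c^-1.
have kgt0 : (0 : R) < k%:R by rewrite ltr0n.
have S1 : S = \sum_(1 <= i < k.+1) powR (lam i) c + \sum_(k.+1 <= i < d.+1) powR (lam i) c.
  by rewrite /S (big_cat_nat _ (n := k.+1)).
have T0 : 0 <= \sum_(k.+1 <= i < d.+1) powR (lam i) c.
  by apply: sumr_ge0 => i _; apply: powR_ge0.
have U0 : 0 <= \sum_(1 <= i < k.+1) powR (lam i) c.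
  by apply: sumr_ge0 => i _; apply: powR_ge0.
have S0 : 0 <= S by rewrite S1 addr_ge0.
have M0 : 0 <= M by rewrite /M mulr_ge0 // invr_ge0 ltW.
have m0 : 0 <= m by apply: powR_ge0.
have hm : powR m c = M.
  by rewrite /m -powRrM mulVf ?gt_eqF // powRr1.
have key : forall i, (k.+1 <= i < d.+1)%N -> lam i <= powR (lam i) c * powR m (1 - c).
  move=> i /andP[ki id].
  have i1 : (1 <= i)%N by apply: leq_trans ki.
  have idd : (i <= d)%N by [].
  have li0 := hpos i i1 idd.
  have lic : powR (lam i) c <= M.
    rewrite /M ler_pdivlMl //.
    apply: le_trans (_ : \sum_(1 <= j < k.+1) powR (lam i) c <= _).
      by rewrite sumr_const_nat subn1 /= mulr_natl.
    rewrite S1 -[X in X <= _]addr0 lerD //.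
    apply: ler_sum_nat => j /andP[j1 jk].
    apply: ge0_ler_powR; rewrite ?nnegrE; try exact: ltW.
      apply: ltW; apply: hpos => //; apply: leq_trans hkd; by rewrite -ltnS.
    apply: hmono => //; apply: leq_trans (ltnW ki); by rewrite -ltnS.
  have lim : lam i <= m.
    have -> : lam i = powR (powR (lam i) c) c^-1.
      by rewrite -powRrM mulfV ?gt_eqF // powRr1 // ltW.
    apply: ge0_ler_powR; rewrite ?nnegrE ?invr_ge0 ?powR_ge0 //; exact: ltW.
  have E : lam i = powR (lam i) c * powR (lam i) (1 - c) :> R.
    rewrite -powRD; first by rewrite addrC subrK powRr1 // ltW.
    by rewrite (gt_eqF li0) implybT.
  rewrite {1}E ler_wpM2l ?powR_ge0 //.
  apply: ge0_ler_powR; rewrite ?nnegrE ?subr_ge0 //; exact: ltW.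
have hsum : \sum_(k.+1 <= i < d.+1) lam i <= powR m (1 - c) * S.
  apply: le_trans (_ : \sum_(k.+1 <= i < d.+1) powR (lam i) c * powR m (1 - c) <= _).
    by apply: ler_sum_nat => j hj; apply: key.
  rewrite -big_distrl /= mulrC ler_wpM2l ?powR_ge0 // S1 lerDr //.
have hS : S = k%:R * powR m c by rewrite hm /M mulrA mulfV ?gt_eqF // mul1r.
rewrite ler_pdivrMl //.
apply: (le_trans hsum).
rewrite hS mulrCA -powRD; last by rewrite subrK oner_eq0.
by rewrite subrK powRr1.
Qed.
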